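(* Let $G$ be a split graph with vertex partition $\{X,Y\}$, where $X=\{v_1,\ldots,v_n\}$ is a maximal clique of $G$ and $Y=V(G)\setminus X$ is a stable set, and write $d_i=|N_G(v_i)\cap Y|$, with $d_1\ge\cdots\ge d_n$ and $d_{\lfloor n/2\rfloor}\ge 1$. If $n\ge 3$, then $G$ admits a decomposition into locally irregular subgraphs and $\chi'_{\rm irr}(G)\le 2$.
   Context: All graphs are finite and simple. A graph is locally irregular if any two adjacent vertices have distinct degrees. A locally irregular decomposition of $G$ is a collection of locally irregular subgraphs whose edge sets partition $E(G)$; for a graph admitting one, $\chi'_{\rm irr}(G)$ is the minimum number of subgraphs in such a decomposition. *)

(* Defs.v *)
(* A subgraph is given by its edge relation
   (a symmetric relation contained in e); vertices not incident to any of its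
   edges play no role in local irregularity. *)
From mathcomp Require Import all_boot.
Set Implicit Arguments. Unset Strict Implicit. Unset Printing Implicit Defensive.

Section Defs.
Variable T : finType.

Definition simple_graph (e : rel T) : Prop := symmetric e /\ irreflexive e.

Definition deg (h : rel T) (x : T) : nat := #|[set y | h x y]|.

Definition locally_irregular (h : rel T) : Prop :=
  forall x y, h x y -> deg h x <> deg h y.

Definition is_subgraph (e h : rel T) : Prop :=
  symmetric h /\ (forall x y, h x y -> e x y).

Definition irr_decomposition (e : rel T) (k : nat) (H : 'I_k -> rel T) : Prop :=
  [/\ forall i, is_subgraph e (H i),
      forall i, locally_irregular (H i),
      forall i, exists x y, H i x y
    & forall x y, e x y -> exists! i, H i x y].

Definition clique (e : rel T) (X : {set T}) : Prop :=
  forall x y, x \in X -> y \in X -> x != y -> e x y.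

Definition maximal_clique (e : rel T) (X : {set T}) : Prop :=
  clique e X /\ forall Z : {set T}, X \subset Z -> clique e Z -> Z = X.

Definition stable (e : rel T) (Y : {set T}) : Prop :=
  forall x y, x \in Y -> y \in Y -> ~~ e x y.

End Defs.

(* Main.v *)
Require Import Defs.
From mathcomp Require Import all_boot zify.

Definition sgm (k m i : nat) := if i < m then i else if i < k then i.+1 else if i == k then m else i.
Definition rotk (k i : nat) := if i <= k then i + k else i - k.+1.
Ltac brute := (try rewrite /rotk); repeat (case: ifP => ?); rewrite /sgm; repeat (case: ifP => ?); lia.

Lemma sig_lt k m i n : m <= k -> k < n -> i < n -> sgm k m i < n.
Proof. move=> *; brute. Qed.
Lemma sig_inj k m i j n : m <= k -> k < n -> i < n -> j < n -> sgm k m i = sgm k m j -> i = j.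
Proof. move=> ? ? ? ?; brute. Qed.
Lemma sig_mono k m i j n : m <= k -> i <= j -> j < n -> (j < k) || (k <= i) -> sgm k m i <= sgm k m j.
Proof. move=> ? ? ?; brute. Qed.
Lemma sig_id k i : sgm k k i = i.
Proof. brute. Qed.
Lemma sig_hit k m q n : m <= k -> k < n -> q < n -> (q = m \/ k < q) ->
  exists j, k <= j < n /\ sgm k m j = q.
Proof.
move=> ? ? ? [->|H]; first by exists k; split; [lia | brute].
exists q; split; [lia|brute].
Qed.
Lemma sig_last k m n : m <= k -> k.+1 < n -> sgm k m n.-1 = n.-1.
Proof. move=> ? ?; brute. Qed.

Lemma rs_lt k m i n : n = (2 * k).+1 -> m <= k -> i < n -> sgm k m (rotk k i) < n.
Proof. move=> ? ? ?; brute. Qed.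
Lemma rs_inj k m i j n : n = (2 * k).+1 -> m <= k -> i < n -> j < n ->
  sgm k m (rotk k i) = sgm k m (rotk k j) -> i = j.
Proof. move=> ? ? ? ?; brute. Qed.
Lemma rs_mono k m i j n : n = (2 * k).+1 -> m <= k -> i <= j -> j < n ->
  (j < k.+1) || (k.+1 <= i) -> sgm k m (rotk k i) <= sgm k m (rotk k j).
Proof. move=> ? ? ? ?; brute. Qed.
Lemma rs_hit k m q n : n = (2 * k).+1 -> 1 <= k -> m <= k -> q < n -> (q = m \/ k < q) ->
  exists j, j < k.+1 /\ sgm k m (rotk k j) = q.
Proof.
move=> ? ? ? ? [->|H]; first by exists 0; split; [lia | rewrite (_ : rotk k 0 = k) //; brute].
exists (q - k); split; [lia|brute].
Qed.
Lemma rs_last k m n : n = (2 * k).+1 -> 1 <= k -> m <= k -> sgm k m (rotk k k) = n.-1.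
Proof. move=> ? ? ?; brute. Qed.
Lemma rs_first k n : n = (2 * k).+1 -> 1 <= k -> sgm k k (rotk k (2 * k)) = k.-1.
Proof. move=> ? ?; brute. Qed.

Set Implicit Arguments. Unset Strict Implicit. Unset Printing Implicit Defensive.

Lemma cnt n (P : pred nat) : #|[set j : 'I_n | P j]| = count P (iota 0 n).
Proof.
rewrite -sum1_card -sum1_count.
have := (big_mkord (R:=nat) (idx:=0) (op:=addn) (n:=n) P (fun _ => 1)).
rewrite /index_iota subn0 => ->.
apply: eq_bigl => j; by rewrite !inE.
Qed.

Lemma cnt_range n lo hi : count (fun j => lo <= j < hi) (iota 0 n) = minn hi n - lo.
Proof.
elim: n => [|n IH]; first by rewrite /= minn0.
have -> : iota 0 n.+1 = iota 0 n ++ [:: n] by rewrite -addn1 iotaD.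
rewrite count_cat IH /= addn0.
case: (ltnP n hi) => H; case: (leqP lo n) => H2 /=; lia.
Qed.

Definition dY (T : finType) (e : rel T) (X : {set T}) (x : T) :=
  #|[set y in ~: X | e x y]|.

Section Core.
Variables (T : finType) (e : rel T) (X : {set T}) (n a : nat) (w : 'I_n -> T).
Hypothesis esy : symmetric e.
Hypothesis eirr : irreflexive e.
Hypothesis Xcl : clique e X.
Hypothesis Ystab : stable e (~: X).
Hypothesis winj : injective w.
Hypothesis wX : [set w i | i : 'I_n] = X.
Hypothesis Ha1 : n <= 2 * a.
Hypothesis Ha2 : 2 * a <= n.+1.
Hypothesis Hn : 3 <= n.

Local Notation d := (dY e X).

Definition pos (t : T) : nat := if [pick i | w i == t] is Some i then val i else n.
Definition rc (i j : nat) : bool :=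
  if i < a then (if j < a then false else j - a < i)
  else (if j < a then i - a < j else true).
Definition Red : rel T := fun x y => e x y && rc (pos x) (pos y).
Definition Blue : rel T := fun x y => e x y && ~~ rc (pos x) (pos y).

Lemma wX_in i : w i \in X.
Proof. by rewrite -wX imset_f. Qed.

Lemma inX t : t \in X -> exists i, t = w i.
Proof. rewrite -wX => /imsetP [i _ ->]; by exists i. Qed.

Lemma pos_w i : pos (w i) = i.
Proof.
rewrite /pos; case: pickP => [j /eqP /winj -> // | /(_ i)]; by rewrite eqxx.
Qed.

Lemma pos_Y t : t \notin X -> pos t = n.
Proof.
move=> tX; rewrite /pos; case: pickP => [j /eqP Hj | //].
by move: tX; rewrite -Hj wX_in.
Qed.

Lemma rc_sym i j : rc i j = rc j i.
Proof. by rewrite /rc; case: ifP; case: ifP. Qed.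

Lemma rcY i : i < n -> rc i n = (a <= i).
Proof.
move=> Hi; rewrite /rc.
have -> : (n < a) = false by apply/negbTE; rewrite -leqNgt; lia.
case: ltnP => H //; apply/negbTE; rewrite -leqNgt; lia.
Qed.

Lemma clique_w i j : i != j -> e (w i) (w j).
Proof.
move=> ij; apply: Xcl; rewrite ?wX_in //.
by apply: contra ij => /eqP /winj ->.
Qed.

Lemma deg_split i (P : pred T) :
  #|[set y | e (w i) y && P y]| =
  #|[set j : 'I_n | (j != i) && P (w j)]| + #|[set y in ~: X | e (w i) y && P y]|.
Proof.
rewrite -(cardsID X [set y | e (w i) y && P y]).
congr (_ + _).
- rewrite -(card_imset _ winj). apply: eq_card => y; rewrite !inE.
  apply/andP/imsetP.
  + case=> /andP [Hy HP] yX. case: (inX yX) => j Ej; subst y.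
    exists j => //. rewrite inE HP andbT. apply/eqP => ji; subst j.
    by rewrite eirr in Hy.
  + case=> j; rewrite inE => /andP [ji HP] ->. rewrite HP andbT wX_in.
    split=> //. apply: clique_w. by rewrite eq_sym.
- apply: eq_card => y; rewrite !inE. by rewrite andbC.
Qed.

Definition cR i := #|[set j : 'I_n | (j != i) && rc i j]|.
Definition cB i := #|[set j : 'I_n | (j != i) && ~~ rc i j]|.

Lemma degR (i : 'I_n) : deg Red (w i) = cR i + (if a <= i then d (w i) else 0).
Proof.
rewrite /deg /Red.
have -> : [set y | e (w i) y && rc (pos (w i)) (pos y)] =
          [set y | e (w i) y && rc i (pos y)] by apply/setP => y; rewrite !inE pos_w.
rewrite deg_split; congr (_ + _).
- rewrite /cR; apply: eq_card => j; by rewrite !inE pos_w.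
- rewrite /dY; case: ifP => H.
  + apply: eq_card => y; rewrite !inE.
    case: (boolP (y \in X)) => //= yX; by rewrite pos_Y // rcY // H andbT.
  + apply/eqP; rewrite cards_eq0; apply/eqP/setP => y; rewrite !inE.
    case: (boolP (y \in X)) => //= yX; by rewrite pos_Y // rcY // H andbF.
Qed.

Lemma degB (i : 'I_n) : deg Blue (w i) = cB i + (if i < a then d (w i) else 0).
Proof.
rewrite /deg /Blue.
have -> : [set y | e (w i) y && ~~ rc (pos (w i)) (pos y)] =
          [set y | e (w i) y && ~~ rc i (pos y)] by apply/setP => y; rewrite !inE pos_w.
rewrite deg_split; congr (_ + _).
- rewrite /cB; apply: eq_card => j; by rewrite !inE pos_w.
- rewrite /dY; case: ltnP => H.
  + apply: eq_card => y; rewrite !inE.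
    case: (boolP (y \in X)) => //= yX. rewrite pos_Y // rcY //.
    by rewrite -ltnNge H andbT.
  + apply/eqP; rewrite cards_eq0; apply/eqP/setP => y; rewrite !inE.
    case: (boolP (y \in X)) => //= yX; by rewrite pos_Y // rcY // H andbF.
Qed.

Lemma cRB (i : 'I_n) : cR i + cB i = n.-1.
Proof.
rewrite /cR /cB.
have := cardsC1 i; rewrite card_ord => <-; rewrite -(cardsID [set j : 'I_n | rc i j] [set~ i]).
congr (_ + _); apply: eq_card => j; by rewrite !inE andbC.
Qed.


Lemma cR_lt (i : 'I_n) : i < a -> cR i = i.
Proof.
move=> Hi; rewrite /cR.
have -> : [set j : 'I_n | (j != i) && rc i j] = [set j : 'I_n | a <= j < a + i].
  apply/setP => j; rewrite !inE /rc Hi.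
  case: ltnP => Hj /=; first by rewrite andbF.
  have -> : (j != i) = true by apply/eqP => E; subst; lia.
  apply/idP/idP => H; lia.
rewrite (cnt _ (fun j => a <= j < a + i)) cnt_range; lia.
Qed.

Lemma cB_ge (i : 'I_n) : a <= i -> cB i = i - a + 1.
Proof.
move=> Hi; rewrite /cB.
have -> : [set j : 'I_n | (j != i) && ~~ rc i j] = [set j : 'I_n | 0 <= j < i - a + 1].
  have Hi' := ltn_ord i.
  apply/setP => j; rewrite !inE /rc.
  have -> : (i < a) = false by apply/negbTE; rewrite -leqNgt.
  case: ltnP => Hj /=.
  + have -> : (j != i) = true by apply/eqP => E; subst; lia.
    apply/idP/idP => H; lia.
  + by rewrite andbF; apply/esym/negbTE; rewrite -leqNgt; lia.
rewrite (cnt _ (fun j => 0 <= j < i - a + 1)) cnt_range; have := ltn_ord i; lia.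
Qed.

Lemma degY t (P : pred T) : t \notin X ->
  #|[set y | e t y && P y]| = #|[set j : 'I_n | e t (w j) && P (w j)]|.
Proof.
move=> tX; rewrite -(card_imset _ winj); apply: eq_card => y; rewrite !inE.
apply/andP/imsetP.
- case=> Hy HP. case: (boolP (y \in X)) => yX.
  + case: (inX yX) => j Ej; subst y. exists j => //. by rewrite inE Hy HP.
  + by move: (Ystab (x:=t) (y:=y)); rewrite !inE tX yX Hy => /(_ isT isT).
- case=> j; rewrite inE => /andP [H1 H2] ->; by split.
Qed.

Lemma degRY t : t \notin X ->
  deg Red t <= n - a /\
  ((exists j : 'I_n, (a <= j) && ~~ e (w j) t) -> deg Red t < n - a).
Proof.
move=> tX; rewrite /deg /Red.
have -> : #|[set y | e t y && rc (pos t) (pos y)]| = #|[set j : 'I_n | e t (w j) && (a <= j)]|.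
  rewrite degY //; apply: eq_card => j; rewrite !inE pos_w pos_Y // rc_sym rcY //.
have Hc : #|[set j : 'I_n | a <= j]| = n - a.
  rewrite (_ : [set j : 'I_n | a <= j] = [set j : 'I_n | a <= j < n]); last first.
    by apply/setP => j; rewrite !inE ltn_ord andbT.
  by rewrite (cnt _ (fun j => a <= j < n)) cnt_range minnn.
split.
- rewrite -Hc; apply: subset_leq_card; apply/subsetP => j; rewrite !inE; by case/andP.
- case=> j0 /andP [H1 H2]. rewrite -Hc; apply: proper_card; apply/properP; split.
  + apply/subsetP => j; rewrite !inE; by case/andP.
  + exists j0; rewrite !inE ?H1 // esy (negbTE H2) //.
Qed.

Lemma degBY t : t \notin X ->
  deg Blue t <= a /\
  ((exists j : 'I_n, (j < a) && ~~ e (w j) t) -> deg Blue t < a).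
Proof.
move=> tX; rewrite /deg /Blue.
have -> : #|[set y | e t y && ~~ rc (pos t) (pos y)]| = #|[set j : 'I_n | e t (w j) && (j < a)]|.
  rewrite degY //; apply: eq_card => j; rewrite !inE pos_w pos_Y // rc_sym rcY // -ltnNge //.
have Hc : #|[set j : 'I_n | j < a]| = a.
  rewrite (_ : [set j : 'I_n | j < a] = [set j : 'I_n | 0 <= j < a]); last first.
    by apply/setP => j; rewrite !inE.
  rewrite (cnt _ (fun j => 0 <= j < a)) cnt_range; lia.
split.
- apply: leq_trans (eq_leq Hc); apply: subset_leq_card; apply/subsetP => j; rewrite !inE; by case/andP.
- case=> j0 /andP [H1 H2]. apply: leq_trans (eq_leq Hc); apply: proper_card; apply/properP; split.
  + apply/subsetP => j; rewrite !inE; by case/andP.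
  + exists j0; rewrite !inE ?H1 // esy (negbTE H2) //.
Qed.


Hypothesis Hsort : forall i j : 'I_n, i <= j -> (i < a) = (j < a) -> d (w j) <= d (w i).
Hypothesis H4 : forall i : 'I_n, i.+1 = n -> n.+1 = 2 * a -> 1 <= d (w i).
Hypothesis H3 : forall i : 'I_n, i.+1 = a -> n = 2 * a -> 1 <= d (w i).
Hypothesis H5 : forall i : 'I_n, i.+1 = a -> n.+1 = 2 * a -> forall t, t \notin X ->
  e (w i) t -> 2 <= d (w i) \/ exists j : 'I_n, (j < a) && ~~ e (w j) t.
Hypothesis H6 : forall i : 'I_n, i.+1 = n -> n = 2 * a -> forall t, t \notin X ->
  e (w i) t -> 2 <= d (w i) \/ exists j : 'I_n, (a <= j) && ~~ e (w j) t.

Lemma LI_XX_R (i j : 'I_n) : i != j -> rc i j -> deg Red (w i) <> deg Red (w j).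
Proof.
move=> ij; rewrite !degR /rc.
have Ri := cRB i; have Rj := cRB j.
have Hi' := ltn_ord i; have Hj' := ltn_ord j.
have ij' : (i:nat) <> j by move=> E; move/eqP: ij; apply; apply: val_inj.
case: (ltnP i a) => Hi; case: (ltnP j a) => Hj //= Hr.
- rewrite cR_lt // in Ri *.
  have := cB_ge Hj. have := H4 (i:=j). lia.
- rewrite (cR_lt Hj) in Rj *.
  have := cB_ge Hi. have := H4 (i:=i). lia.
- have := cB_ge Hi; have := cB_ge Hj.
  have Hg : (i < a) = (j < a) by rewrite ltnNge Hi ltnNge Hj.
  case: (leqP i j) => ij2.
  + have := Hsort ij2 Hg; lia.
  + have := Hsort (ltnW ij2) (esym Hg); lia.
Qed.

Lemma LI_XX_B (i j : 'I_n) : i != j -> ~~ rc i j -> deg Blue (w i) <> deg Blue (w j).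
Proof.
move=> ij; rewrite !degB /rc.
have Ri := cRB i; have Rj := cRB j.
have Hi' := ltn_ord i; have Hj' := ltn_ord j.
have ij' : (i:nat) <> j by move=> E; move/eqP: ij; apply; apply: val_inj.
case: (ltnP i a) => Hi; case: (ltnP j a) => Hj //= Hr.
- rewrite (cR_lt Hi) in Ri; rewrite (cR_lt Hj) in Rj.
  have Hg : (i < a) = (j < a) by rewrite Hi Hj.
  case: (leqP i j) => ij2.
  + have := Hsort ij2 Hg; lia.
  + have := Hsort (ltnW ij2) (esym Hg); lia.
- rewrite (cR_lt Hi) in Ri.
  have := cB_ge Hj. have := H3 (i:=i). lia.
- rewrite (cR_lt Hj) in Rj.
  have := cB_ge Hi. have := H3 (i:=j). lia.
Qed.

Lemma dpos (i : 'I_n) t : t \notin X -> e (w i) t -> 0 < d (w i).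
Proof. move=> tX et; apply/card_gt0P; exists t; by rewrite !inE tX et. Qed.

Lemma LI_XY_R (i : 'I_n) t : t \notin X -> Red (w i) t -> deg Red (w i) <> deg Red t.
Proof.
move=> tX /andP [et r]. rewrite pos_w pos_Y // rcY // in r.
have dp := dpos tX et.
have [R1 R2] := degRY tX.
have Hi' := ltn_ord i.
rewrite degR r.
have := cRB i; have := cB_ge r.
case: (boolP ((i.+1 == n) && (n == 2 * a))) => C.
- move/andP: C => [/eqP C1 /eqP C2]. case: (H6 C1 C2 tX et) => [H2|Hex].
  + lia.
  + have := R2 Hex; lia.
- move/nandP: C => [/eqP C|/eqP C]; lia.
Qed.

Lemma LI_XY_B (i : 'I_n) t : t \notin X -> Blue (w i) t -> deg Blue (w i) <> deg Blue t.
Proof.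
move=> tX /andP [et r]. rewrite pos_w pos_Y // rcY // -ltnNge in r.
have dp := dpos tX et.
have [R1 R2] := degBY tX.
have Hi' := ltn_ord i.
rewrite degB r.
have := cRB i; have := cR_lt r.
case: (boolP ((i.+1 == a) && (n.+1 == 2 * a))) => C.
- move/andP: C => [/eqP C1 /eqP C2]. case: (H5 C1 C2 tX et) => [H2|Hex].
  + lia.
  + have := R2 Hex; lia.
- move/nandP: C => [/eqP C|/eqP C]; lia.
Qed.

Lemma Red_sym : symmetric Red.
Proof. by move=> x y; rewrite /Red esy rc_sym. Qed.
Lemma Blue_sym : symmetric Blue.
Proof. by move=> x y; rewrite /Blue esy rc_sym. Qed.

Lemma LI_Red : locally_irregular Red.
Proof.
move=> x y Rxy.
case: (boolP (x \in X)) => xX; case: (boolP (y \in X)) => yX.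
- case: (inX xX) => i Ex; subst x; case: (inX yX) => j Ey; subst y.
  move: (Rxy) => /andP [exy]; rewrite !pos_w => r.
  apply: LI_XX_R => //. apply/eqP => E; subst j; by rewrite eirr in exy.
- case: (inX xX) => i Ex; subst x. exact: LI_XY_R.
- case: (inX yX) => j Ey; subst y. rewrite Red_sym in Rxy.
  move=> E; apply: (LI_XY_R xX Rxy); by rewrite E.
- move: Rxy => /andP [exy _].
  by move: (Ystab (x:=x) (y:=y)); rewrite !inE xX yX exy => /(_ isT isT).
Qed.

Lemma LI_Blue : locally_irregular Blue.
Proof.
move=> x y Rxy.
case: (boolP (x \in X)) => xX; case: (boolP (y \in X)) => yX.
- case: (inX xX) => i Ex; subst x; case: (inX yX) => j Ey; subst y.
  move: (Rxy) => /andP [exy]; rewrite !pos_w => r.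
  apply: LI_XX_B => //. apply/eqP => E; subst j; by rewrite eirr in exy.
- case: (inX xX) => i Ex; subst x. exact: LI_XY_B.
- case: (inX yX) => j Ey; subst y. rewrite Blue_sym in Rxy.
  move=> E; apply: (LI_XY_B xX Rxy); by rewrite E.
- move: Rxy => /andP [exy _].
  by move: (Ystab (x:=x) (y:=y)); rewrite !inE xX yX exy => /(_ isT isT).
Qed.

Lemma core_decomp : exists H : 'I_2 -> rel T, irr_decomposition e H.
Proof.
exists (fun k : 'I_2 => if k == ord0 then Red else Blue).
split.
- move=> k; case: (k == ord0); split; try exact: Red_sym; try exact: Blue_sym;
  by move=> x y /andP [].
- move=> k; case: (k == ord0); [exact: LI_Red | exact: LI_Blue].
- move=> k; case: (k == ord0).
  + have Han : a < n by lia.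
    have Han1 : a.-1 < n by lia.
    exists (w (Ordinal Han1)), (w (Ordinal Han)).
    rewrite /Red !pos_w /= clique_w /=; last first.
      apply/eqP => E; have := f_equal val E => /=; lia.
    rewrite /rc. have -> : a.-1 < a by lia.
    rewrite ltnn subnn; lia.
  + have H0 : 0 < n by lia.
    have H1 : 1 < n by lia.
    exists (w (Ordinal H0)), (w (Ordinal H1)).
    rewrite /Blue !pos_w /= clique_w //= /rc.
    have -> : 0 < a by lia.
    by have -> : 1 < a by lia.
- move=> x y exy.
  case: (boolP (rc (pos x) (pos y))) => r.
  + exists ord0; split; first by rewrite eqxx /Red exy r.
    move=> k; case: (k =P ord0) => // _; by rewrite /Blue r andbF.
  + exists (@Ordinal 2 1 isT); split; first by rewrite (_ : (@Ordinal 2 1 isT == ord0) = false) // /Blue exy r.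
    move=> k; case: (k =P ord0) => [_|Hk]; first by rewrite /Red (negbTE r) andbF.
    move=> _; apply: val_inj => /=. case: k Hk => [[|[|m]]] //= Hm Hk.
    by exfalso; apply: Hk; apply: val_inj.
Qed.

End Core.


Lemma final_gen (T : finType) (e : rel T) (X : {set T}) (n : nat) (v : 'I_n -> T)
  (a : nat) (f : nat -> nat) :
  symmetric e -> irreflexive e -> clique e X -> stable e (~: X) -> injective v ->
  [set v i | i : 'I_n] = X -> n <= 2 * a -> 2 * a <= n.+1 -> 3 <= n ->
  (forall i j : 'I_n, i <= j -> dY e X (v j) <= dY e X (v i)) ->
  (forall i, i < n -> f i < n) ->
  (forall i j, i < n -> j < n -> f i = f j -> i = j) ->
  (forall i j, i <= j -> j < n -> (j < a) || (a <= i) -> f i <= f j) ->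
  (forall i j : 'I_n, i.+1 = a -> n = 2 * a -> (j : nat) = f i -> 1 <= dY e X (v j)) ->
  (forall i j : 'I_n, i.+1 = n -> n.+1 = 2 * a -> (j : nat) = f i -> 1 <= dY e X (v j)) ->
  (forall i j : 'I_n, i.+1 = a -> n.+1 = 2 * a -> (j : nat) = f i -> forall t, t \notin X ->
     e (v j) t -> 2 <= dY e X (v j) \/
     exists q p : 'I_n, [/\ p < a, (q : nat) = f p & ~~ e (v q) t]) ->
  (forall i j : 'I_n, i.+1 = n -> n = 2 * a -> (j : nat) = f i -> forall t, t \notin X ->
     e (v j) t -> 2 <= dY e X (v j) \/
     exists q p : 'I_n, [/\ a <= p, (q : nat) = f p & ~~ e (v q) t]) ->
  exists H : 'I_2 -> rel T, irr_decomposition e H.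
Proof.
move=> esy eirr Xcl Ystab vinj vX Ha1 Ha2 Hn Hmono F1 F2 F3 G3 G4 G5 G6.
have F1' : forall i : 'I_n, f i < n by move=> i; apply: F1.
pose w := fun i : 'I_n => v (Ordinal (F1' i)).
have winj : injective w.
  move=> i j /vinj /(f_equal val) /= E; apply: val_inj; exact: F2 (ltn_ord i) (ltn_ord j) E.
have wX : [set w i | i : 'I_n] = X.
  apply/eqP; rewrite eqEcard; apply/andP; split.
  - apply/subsetP => x /imsetP [k0 _ ->]; rewrite -vX; by apply/imsetP; exists (Ordinal (F1' k0)).
  - by rewrite -vX (card_imset _ vinj) (card_imset _ winj).
apply: (core_decomp (w := w) esy eirr Xcl Ystab winj wX Ha1 Ha2 Hn).
- move=> i j ij Hg; apply: Hmono => /=; apply: F3 => //.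
  move: Hg; case: (ltnP i a) => Hi; case: (ltnP j a) => Hj //= _; lia.
- move=> i Hi Ha; exact: (G4 i (Ordinal (F1' i)) Hi Ha erefl).
- move=> i Hi Ha; exact: (G3 i (Ordinal (F1' i)) Hi Ha erefl).
- move=> i Hi Ha t tX et; case: (G5 i (Ordinal (F1' i)) Hi Ha erefl t tX et) => [->|[q [p [H1 H2 H3]]]]; first by left.
  right; exists p; rewrite H1 /=.
  have -> : w p = v q by rewrite /w; congr v; apply: val_inj => /=.
  done.
- move=> i Hi Ha t tX et; case: (G6 i (Ordinal (F1' i)) Hi Ha erefl t tX et) => [->|[q [p [H1 H2 H3]]]]; first by left.
  right; exists p; rewrite H1 /=.
  have -> : w p = v q by rewrite /w; congr v; apply: val_inj => /=.
  done.
Qed.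

Unset Implicit Arguments.

Theorem lemma2p4 (T : finType) (e : rel T) (X : {set T}) (n : nat)
    (v : 'I_n -> T) :
  simple_graph e ->
  maximal_clique e X ->
  stable e (~: X) ->
  injective v ->
  [set v i | i : 'I_n] = X ->
  (* d_i = |N(v_i) ∩ Y| is nonincreasing along the enumeration *)
  (forall i j : 'I_n, (i <= j)%N ->
     (#|[set y in ~: X | e (v j) y]| <= #|[set y in ~: X | e (v i) y]|)%N) ->
  (* d_{floor(n/2)} >= 1, with 1-based indexing of v_1..v_n *)
  (forall i : 'I_n, i.+1 = n./2 -> (1 <= #|[set y in ~: X | e (v i) y]|)%N) ->
  (3 <= n)%N ->
  exists k : nat, (k <= 2)%N /\ exists H : 'I_k -> rel T, irr_decomposition e H.
Proof.
move=> [esy eirr] [Xcl Xmax] Ystab vinj vX Hmono Hhalf Hn.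
have Hmono' : forall i j : 'I_n, i <= j -> dY e X (v j) <= dY e X (v i) := Hmono.
have Hhalf' : forall i : 'I_n, i.+1 = n./2 -> 1 <= dY e X (v i) := Hhalf.
exists 2; split => //.
set k := n./2.
have Hk2 : n = k.*2 + odd n by rewrite /k addnC odd_double_half.
have nonadj : forall t, t \notin X -> exists q : 'I_n, ~~ e (v q) t.
  move=> t tX. case: (boolP [exists q, ~~ e (v q) t]) => [/existsP //| /existsPn H].
  exfalso.
  have inX : forall x, x \in X -> e x t.
    move=> x; rewrite -vX => /imsetP [q _ ->]; by have := H q; rewrite negbK.
  have Z := Xmax (t |: X) (subsetUr _ _).
  have : t |: X = X.
    apply: Z => x y; rewrite !inE => /orP[/eqP->|xX] /orP[/eqP->|yX] xy.
    + by rewrite eqxx in xy.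
    + by rewrite esy inX.
    + by rewrite inX.
    + exact: Xcl.
  move=> E; move: tX; by rewrite -E setU11.
have Hzn : n.-1 < n by lia.
pose z := Ordinal Hzn.
have [m [Hm [Hmk Hzt]]] : exists m, m <= k /\
   (m = k \/ forall i : 'I_n, 1 <= dY e X (v i)) /\
   forall t, t \notin X -> e (v z) t -> 2 <= dY e X (v z) \/
     exists q : 'I_n, ((q:nat) = m \/ k < q) /\ ~~ e (v q) t.
  case: (boolP (dY e X (v z) == 1)) => dz.
  - move: (dz) => /cards1P [t0 Ht0].
    have : t0 \in [set y in ~: X | e (v z) y] by rewrite Ht0 set11.
    rewrite !inE => /andP [t0X et0].
    case: (nonadj t0 t0X) => q Hq.
    exists (minn q k); split; first exact: geq_minr.
    split.
    + right => i. move/eqP: dz => dz. rewrite -dz. apply: Hmono' => /=.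
      have := ltn_ord i; lia.
    + move=> t tX et. right.
      have : t \in [set y in ~: X | e (v z) y] by rewrite !inE tX et.
      rewrite Ht0 => /set1P ->. exists q; split => //.
      case: (leqP q k) => H; [left; lia | by right].
  - exists k; split => //; split; first by left.
    move=> t tX et; left.
    have : 0 < dY e X (v z) by apply/card_gt0P; exists t; rewrite !inE tX et.
    move: dz; lia.
case: (boolP (odd n)) => Hodd.
- have Hn2 : n = (2 * k).+1 by move: Hk2; rewrite Hodd; lia.
  have Hk1 : 1 <= k by lia.
  apply: (final_gen (a := k.+1) (f := fun i => sgm k m (rotk k i)) esy eirr Xcl Ystab vinj vX).
  + lia.
  + lia.
  + lia.
  + exact: Hmono'.
  + move=> i Hi; exact: rs_lt Hn2 Hm Hi.
  + move=> i j Hi Hj; exact: rs_inj Hn2 Hm Hi Hj.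
  + move=> i j ij Hj; exact: rs_mono Hn2 Hm ij Hj.
  + move=> i j _ Ha; lia.
  + move=> i j Hi _ Hj; case: Hmk => [Em|Hall]; last exact: Hall.
    apply: Hhalf'. rewrite Hj. have -> : (i:nat) = 2 * k by lia.
    rewrite Em (rs_first _ _ Hn2 Hk1); lia.
  + move=> i j Hi _ Hj t tX et.
    have Ejz : j = z by apply: val_inj; rewrite /= Hj (_ : (i:nat) = k); [exact: rs_last | lia].
    subst j; case: (Hzt t tX et) => [->|[q [Hq Hqt]]]; first by left.
    right. have [p [Hp Ep]] := rs_hit _ _ _ _ Hn2 Hk1 Hm (ltn_ord q) Hq.
    have Hpn : p < n by lia.
    exists q, (Ordinal Hpn); split => //=.
  + move=> i j _ Ha; lia.
- have Hn2 : n = 2 * k by move: Hk2; rewrite (negbTE Hodd); lia.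
  have Hk1 : 2 <= k by lia.
  apply: (final_gen (a := k) (f := sgm k m) esy eirr Xcl Ystab vinj vX).
  + lia.
  + lia.
  + lia.
  + exact: Hmono'.
  + move=> i Hi; apply: sig_lt Hm _ Hi; lia.
  + move=> i j Hi Hj; apply: sig_inj Hm _ Hi Hj; lia.
  + move=> i j ij Hj; exact: sig_mono Hm ij Hj.
  + move=> i j Hi _ Hj; case: Hmk => [Em|Hall]; last exact: Hall.
    apply: Hhalf'. rewrite Hj Em sig_id; lia.
  + move=> i j _ Ha; lia.
  + move=> i j _ Ha; lia.
  + move=> i j Hi _ Hj t tX et.
    have Ejz : j = z by apply: val_inj; rewrite /= Hj (_ : (i:nat) = n.-1); [apply: (sig_last _ _ _ Hm); lia | lia].
    subst j; case: (Hzt t tX et) => [->|[q [Hq Hqt]]]; first by left.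
    right. have Hkn : k < n by lia.
    have [p [Hp Ep]] := sig_hit _ _ _ _ Hm Hkn (ltn_ord q) Hq.
    have Hpn : p < n by lia.
    exists q, (Ordinal Hpn); split => //=; by case/andP: Hp.
Qed.
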